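(* Let $\mathbb{K}$ be a field of characteristic not $2$ and $p\geq 1$. Let $f:M_{1,p}(\mathbb{K})\to\mathbb{K}$, $g:M_{p,1}(\mathbb{K})\to\mathbb{K}$, $\varphi:M_{1,p}(\mathbb{K})\to M_{1,p}(\mathbb{K})$, $\psi:M_{p,1}(\mathbb{K})\to M_{p,1}(\mathbb{K})$ be linear. For $L\in M_{1,p}(\mathbb{K})$, $C\in M_{p,1}(\mathbb{K})$ set $$A_L=\begin{bmatrix}0&L&0\\ 0_{p\times1}&0_{p\times p}&0_{p\times1}\\ f(L)&\varphi(L)&0\end{bmatrix},\qquad B_C=\begin{bmatrix}0&0_{1\times p}&0\\ \psi(C)&0_{p\times p}&C\\ g(C)&0_{1\times p}&0\end{bmatrix}\in M_{p+2}(\mathbb{K}).$$ Assume either (i) for all $(L,C)$, every linear combination of $A_L$ and $B_C$ has at most one nonzero eigenvalue in $\overline{\mathbb{K}}$; or (ii) $p\neq 2$ and for all $(L,C)$, every linear combination of $A_L$ and $B_C$ has at most two distinct eigenvalues in $\overline{\mathbb{K}}$. Then there exist $\lambda,\mu\in\mathbb{K}$ with $\varphi(L)=\lambda L$ and $\psi(C)=\mu C$ for all $L,C$.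
   Context: $\overline{\mathbb{K}}$ is an algebraic closure of $\mathbb{K}$; $M_{a,b}(\mathbb{K})$ is the space of $a\times b$ matrices. *)

(* Defs.v *)
From HB Require Import structures.
From mathcomp Require Import all_boot all_order all_algebra.
Set Implicit Arguments. Unset Strict Implicit. Unset Printing Implicit Defensive.
Import GRing.Theory.
Local Open Scope ring_scope.

(* Block matrix A_L of size (1 + p) + 1 = p + 2:
   [ 0     L     0 ]
   [ 0     0     0 ]
   [ f L  phi L  0 ] *)
Definition matA (K : fieldType) (p : nat)
  (f : {linear 'rV[K]_p -> K^o}) (phi : {linear 'rV[K]_p -> 'rV[K]_p})
  (L : 'rV[K]_p) : 'M[K]_(1 + p + 1) :=
  block_mx (block_mx (0 : 'M[K]_1) L 0 0) (0 : 'M[K]_(1 + p, 1))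
           (row_mx ((f L : K)%:M : 'M[K]_1) (phi L)) (0 : 'M[K]_1).

(* Block matrix B_C of size (1 + p) + 1 = p + 2:
   [ 0      0   0 ]
   [ psi C  0   C ]
   [ g C    0   0 ] *)
Definition matB (K : fieldType) (p : nat)
  (g : {linear 'cV[K]_p -> K^o}) (psi : {linear 'cV[K]_p -> 'cV[K]_p})
  (C : 'cV[K]_p) : 'M[K]_(1 + p + 1) :=
  block_mx (block_mx (0 : 'M[K]_1) (0 : 'M[K]_(1, p)) (psi C) (0 : 'M[K]_p))
           (col_mx (0 : 'M[K]_1) C)
           (row_mx ((g C : K)%:M : 'M[K]_1) (0 : 'M[K]_(1, p))) (0 : 'M[K]_1).

Definition is_alg_closure (K : fieldType) (Kbar : closedFieldType)
  (iota : {rmorphism K -> Kbar}) : Prop :=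
  forall x : Kbar, exists q : {poly K}, q != 0 /\ root (map_poly iota q) x.

(* Main.v *)
From HB Require Import structures.
From mathcomp Require Import all_boot all_order all_algebra ring.
Require Import Defs.
Set Implicit Arguments. Unset Strict Implicit. Unset Printing Implicit Defensive.
Import GRing.Theory.
Local Open Scope ring_scope.

Lemma mul_e_delta (K : fieldType) p (j : 'I_p) (u : 'rV[K]_p) :
  u *m delta_mx j 0 = (u 0 j)%:M.
Proof. by apply/matrixP => a b; rewrite !ord1 -colE !mxE eqxx mulr1n. Qed.

Lemma gen_scalar (K : fieldType) (p : nat) (hp : (0 < p)%N)
  (F : {linear 'rV[K]_p -> 'rV[K]_p})
  (key : forall (L : 'rV[K]_p) (C : 'cV[K]_p), (1 < p)%N ->
      L *m C = 0 -> F L *m C = 1%:M -> False) :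
  exists lam : K, forall L, F L = lam *: L.
Proof.
have p1 : forall i j : 'I_p, i != j -> (1 < p)%N.
  move=> [i Hi] [j Hj]; rewrite -val_eqE /= => /negP ne.
  apply/negP => /negP; rewrite -leqNgt => hle; apply: ne.
  by apply/eqP; move: Hi Hj hle; clear; case: p => [|[|]] //; case: i => //; case: j.
have s1 : forall i j : 'I_p, i != j -> F (delta_mx 0 i) 0 j = 0.
  move=> i j ij; apply/eqP/negP => /negP d0.
  apply: (key (delta_mx 0 i) ((F (delta_mx 0 i) 0 j)^-1 *: delta_mx j 0) (p1 _ _ ij)).
    by rewrite -scalemxAr mul_delta_mx_cond (negbTE ij) mulr0n scaler0.
  by rewrite -scalemxAr mul_e_delta // scale_scalar_mx mulVf.
pose c i := F (delta_mx 0 i) 0 i.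
have s2 : forall i, F (delta_mx 0 i) = c i *: delta_mx 0 i.
  move=> i; apply/matrixP => a k; rewrite !ord1 !mxE eqxx /=.
  case: (eqVneq i k) => [<-|ik]; first by rewrite mulr1.
  by rewrite mulr0 s1.
have s3 : forall i j, c i = c j.
  move=> i j; case: (eqVneq i j) => [->//|ij].
  apply/eqP/negP => /negP d0; rewrite -subr_eq0 in d0.
  apply: (key (delta_mx 0 i + delta_mx 0 j)
    ((c i - c j)^-1 *: (delta_mx i 0 - delta_mx j 0)) (p1 _ _ ij)).
    rewrite -scalemxAr mulmxDl !mulmxBr !mul_delta_mx_cond (negbTE ij) eq_sym (negbTE ij).
    by rewrite !eqxx !mulr0n !mulr1n subr0 sub0r subrr scaler0.
  rewrite linearD /= !s2 -scalemxAr mulmxDl !mulmxBr -!scalemxAl !mul_delta_mx_cond.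
  rewrite (negbTE ij) eq_sym (negbTE ij) !eqxx !mulr0n !mulr1n !scaler0 subr0 sub0r.
  rewrite -scalerBl.
  have -> : delta_mx (0 : 'I_1) (0 : 'I_1) = 1%:M :> 'M[K]_1.
    by apply/matrixP => a b; rewrite !ord1 !mxE.
  by rewrite scalerA mulVf // scale1r.
exists (c (Ordinal hp)) => L.
rewrite [in RHS](row_sum_delta L) [in LHS](row_sum_delta L) linear_sum scaler_sumr.
apply: eq_bigr => i _; rewrite linearZ /= s2 (s3 i (Ordinal hp)).
by rewrite !scalerA mulrC.
Qed.
Section E.
Variables (K : fieldType) (p : nat)
  (f : {linear 'rV[K]_p -> K^o}) (g : {linear 'cV[K]_p -> K^o})
  (phi : {linear 'rV[K]_p -> 'rV[K]_p}) (psi : {linear 'cV[K]_p -> 'cV[K]_p}).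

Lemma blockM L C : matA f phi L + matB g psi C =
  block_mx (block_mx 0 L (psi C) 0) (col_mx 0 C)
           (row_mx ((f L : K)%:M + (g C : K)%:M) (phi L)) 0.
Proof.
rewrite /matA /matB add_block_mx add_block_mx add_row_mx !addr0 !add0r.
by [].
Qed.

Lemma eigvec L C (v0 v2 lam : K) (w : 'rV[K]_p) :
  w *m psi C + v2 *: ((f L : K)%:M + (g C : K)%:M) = (lam * v0)%:M ->
  v0 *: L + v2 *: phi L = lam *: w ->
  w *m C = (lam * v2)%:M ->
  row_mx (row_mx v0%:M w) v2%:M *m (matA f phi L + matB g psi C)
   = lam *: row_mx (row_mx v0%:M w) v2%:M.
Proof.
move=> E0 E1 E2.
rewrite blockM mul_row_block mul_row_block mul_row_col mul_mx_row.
rewrite !mulmx0 ?mul0mx !addr0 ?add0r !mul_scalar_mx add_row_mx E0 E1 E2.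
by rewrite !scale_row_mx !scale_scalar_mx.
Qed.

Lemma nz_vec (v0 v2 : K) (w : 'rV[K]_p) :
  (v0 != 0) || (v2 != 0) || (w != 0) -> row_mx (row_mx v0%:M w) v2%:M != 0.
Proof.
move=> H; rewrite !row_mx_eq0; apply/negP => /andP [/andP [a b] c]; move: H.
have sc : forall x : K, (x%:M == 0 :> 'M_1) = (x == 0).
  by move=> x; apply/eqP/eqP => [/matrixP/(_ 0 0)|->]; rewrite ?mxE ?eqxx ?mulr1n //; rewrite raddf0.
by rewrite -!sc a b c.
Qed.

Lemma eig1 L C lam : lam * lam = 1 -> L *m C = 0 -> L *m psi C = 1%:M ->
  exists2 v : 'rV[K]_(1 + p + 1), v *m (matA f phi L + matB g psi C) = lam *: v & v != 0.
Proof.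
move=> l2 LC LpC; exists (row_mx (row_mx 1%:M (lam *: L)) 0%:M); last first.
  by apply: nz_vec; rewrite oner_eq0.
apply: eigvec.
- by rewrite -scalemxAl LpC scale0r addr0 scale_scalar_mx mulr1.
- by rewrite scale1r scale0r addr0 scalerA l2 scale1r.
- by rewrite -scalemxAl LC scaler0 mulr0 raddf0.
Qed.

Lemma eig2 L C lam : lam * lam = 1 -> L *m C = 0 -> phi L *m C = 1%:M ->
  (L *m psi C) 0 0 != 1 ->
  exists2 v : 'rV[K]_(1 + p + 1), v *m (matA f phi L + matB g psi C) = lam *: v & v != 0.
Proof.
move=> l2 LC pLC x1.
set x := (L *m psi C) 0 0 in x1.
set k := (phi L *m psi C) 0 0.
set h := (f L : K) + g C.
have x1' : 1 - x != 0 by rewrite subr_eq0 eq_sym.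
pose v0 := lam * (lam * k + h) / (1 - x).
exists (row_mx (row_mx v0%:M (lam *: (v0 *: L + phi L))) 1%:M); last first.
  by apply: nz_vec; rewrite oner_eq0 orbT.
apply: eigvec.
- rewrite -scalemxAl mulmxDl -scalemxAl (mx11_scalar (L *m psi C)).
  rewrite (mx11_scalar (phi L *m psi C)) -/x -/k scale1r -raddfD /= -/h.
  rewrite !scale_scalar_mx -raddfD /= scale_scalar_mx -raddfD /=; congr (_ %:M).
  have e : lam * k + h = lam * v0 * (1 - x).
    by rewrite /v0 !mulrA l2 mul1r mulfVK.
  transitivity (lam * v0 * x + (lam * k + h)); first ring.
  rewrite e; ring.
- by rewrite scale1r scalerA l2 scale1r.
- by rewrite -scalemxAl mulmxDl -scalemxAl LC scaler0 add0r pLC scale_scalar_mx mulr1.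
Qed.

Lemma eig0 L C : (2 < p)%N ->
  exists2 v : 'rV[K]_(1 + p + 1), v *m (matA f phi L + matB g psi C) = 0 *: v & v != 0.
Proof.
move=> p3.
pose A := row_mx C (psi C).
have : kermx A != 0.
  rewrite -mxrank_eq0 mxrank_ker subn_eq0 -ltnNge.
  exact: leq_ltn_trans (rank_leq_col A) p3.
case/matrix0Pn => i [j nz]; set w := row i (kermx A).
have wA : w *m A = 0 by rewrite /w -row_mul mulmx_ker row0.
move: wA; rewrite /A mul_mx_row => /eqP; rewrite row_mx_eq0 => /andP [/eqP wC /eqP wpC].
exists (row_mx (row_mx 0%:M w) 0%:M); last first.
  apply: nz_vec; rewrite !eqxx /=; apply/eqP => /matrixP/(_ 0 j).
  by rewrite [in X in X = _]mxE => e; move: nz; rewrite e mxE eqxx.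
apply: eigvec.
- by rewrite wpC scale0r addr0 mulr0 raddf0.
- by rewrite !scale0r addr0.
- by rewrite wC mulr0 raddf0.
Qed.
End E.

Lemma map_eig (K : fieldType) (Kbar : closedFieldType) (iota : {rmorphism K -> Kbar})
  n (M : 'M[K]_n) (lam : K) :
  (exists2 v : 'rV[K]_n, v *m M = lam *: v & v != 0) ->
  eigenvalue (map_mx iota M) (iota lam).
Proof.
case=> v vM vnz; apply/eigenvalueP; exists (map_mx iota v).
  by rewrite -map_mxM vM map_mxZ.
by rewrite map_mx_eq0.
Qed.

Theorem mainTheorem15 (K : fieldType) (Kbar : closedFieldType)
  (iota : {rmorphism K -> Kbar}) (halg : is_alg_closure iota)
  (hchar : (2 \notin [pchar K])%N) (p : nat) (hp : (0 < p)%N)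
  (f : {linear 'rV[K]_p -> K^o}) (g : {linear 'cV[K]_p -> K^o})
  (phi : {linear 'rV[K]_p -> 'rV[K]_p}) (psi : {linear 'cV[K]_p -> 'cV[K]_p}) :
  ((forall (L : 'rV[K]_p) (C : 'cV[K]_p) (a b : K) (x y : Kbar),
      let M := map_mx iota (a *: matA f phi L + b *: matB g psi C) in
      eigenvalue M x -> eigenvalue M y -> x != 0 -> y != 0 -> x = y)
   \/
   (p <> 2%N /\
    forall (L : 'rV[K]_p) (C : 'cV[K]_p) (a b : K) (x y z : Kbar),
      let M := map_mx iota (a *: matA f phi L + b *: matB g psi C) in
      eigenvalue M x -> eigenvalue M y -> eigenvalue M z ->
      x = y \/ x = z \/ y = z)) ->
  exists lam mu : K,
    (forall L : 'rV[K]_p, phi L = lam *: L) /\ (forall C : 'cV[K]_p, psi C = mu *: C).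
Proof.
move=> H.
have h2 : (2%:R : K) != 0.
  by apply: contra hchar => h; rewrite inE /= h.
have m1 : (1 : K) != -1.
  apply: contra h2 => /eqP e; by rewrite mulr2n {2}e subrr.
have l1 : (1 : K) * 1 = 1 by rewrite mulr1.
have l2 : (-1 : K) * -1 = 1 by rewrite mulrNN mulr1.
have iinj := fmorph_inj iota.
have bad : forall L C, (1 < p)%N ->
    (exists2 v : 'rV[K]_(1 + p + 1), v *m (matA f phi L + matB g psi C) = 1 *: v & v != 0) ->
    (exists2 v : 'rV[K]_(1 + p + 1), v *m (matA f phi L + matB g psi C) = (-1) *: v & v != 0) ->
    False.
  move=> L C p1 e1 e2.
  have E1 := map_eig iota e1; have E2 := map_eig iota e2.
  rewrite -[matA f phi L]scale1r -[matB g psi C]scale1r in E1 E2.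
  case: H => [H | [p2 H]].
    have := H L C 1 1 (iota 1) (iota (-1)) E1 E2.
    rewrite !fmorph_eq0 oner_eq0 oppr_eq0 oner_eq0 => /(_ isT isT) /iinj /eqP.
    by rewrite (negbTE m1).
  have p3 : (2 < p)%N by move: p1 p2; clear; case: p => [|[|[|]]].
  have E0' : eigenvalue (map_mx iota (1 *: matA f phi L + 1 *: matB g psi C)) (iota 0).
    by rewrite !scale1r; apply: map_eig; case: (eig0 f g phi psi L C p3) => v ? ?; exists v.
  case: (H L C 1 1 _ _ _ E1 E2 E0') => [/iinj /eqP|[/iinj/eqP|/iinj/eqP]].
  - by rewrite (negbTE m1).
  - by rewrite oner_eq0.
  - by rewrite oppr_eq0 oner_eq0.
have keyB : forall L C, (1 < p)%N -> L *m C = 0 -> L *m psi C = 1%:M -> False.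
  move=> L C p1 LC LpC; apply: (bad L C p1).
    exact: eig1.
  exact: eig1.
have keyA : forall L C, (1 < p)%N -> L *m C = 0 -> phi L *m C = 1%:M -> False.
  move=> L C p1 LC pLC.
  case: (eqVneq ((L *m psi C) 0 0) 1) => [x1|x1].
    apply: (keyB L C p1 LC); by rewrite (mx11_scalar (L *m psi C)) x1.
  apply: (bad L C p1); exact: eig2.
have [lam Hlam] := gen_scalar hp keyA.
have keyB' : forall (L : 'rV[K]_p) (C : 'cV[K]_p), (1 < p)%N -> L *m C = 0 ->
    (trmx \o psi \o trmx) L *m C = 1%:M -> False.
  move=> L C p1 LC FLC; apply: (keyB C^T L^T p1).
    by rewrite -trmx_mul LC trmx0.
  by rewrite -[C^T *m _]trmxK trmx_mul trmxK [_ *m C]FLC tr_scalar_mx.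
have [mu Hmu] := @gen_scalar K p hp (trmx \o psi \o trmx) keyB'.
exists lam, mu; split => // C.
apply: trmx_inj; rewrite linearZ /=; have := Hmu C^T; by rewrite /= trmxK.
Qed.
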